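(* Let $(X,d)$ be a compact metric space and $F$ a semiflow on $X$. Let $x,y\in X$ with $y\in\mathcal R_{\mathcal S}$. If $x\succcurlyeq_{\mathcal S} y$, then $x\succcurlyeq_{\mathcal C} y$. In particular $\mathcal R_{\mathcal S}\subset\mathcal R_{\mathcal C}$.
   Context: A semiflow on a metric space $(X,d)$ is a continuous map $F:[0,\infty)\times X\to X$, $(t,x)\mapsto F^t(x)$, with $F^0=\mathrm{id}$ and $F^{t+s}=F^t\circ F^s$ for all $t,s\ge0$. A curve is piecewise continuous if it is continuous except at finitely many points, at which one-sided limits exist. Conley chains: for $\varepsilon>0$, $T>0$, an $(\varepsilon,T)$-chain from $x$ to $y$ is a finite sequence $x=x_0,\dots,x_N=y$ in $X$ with times $t_i\ge T$ such that $d(F^{t_i}(x_i),x_{i+1})<\varepsilon$ for $i=0,\dots,N-1$. Write $x\succcurlyeq_{\mathcal C} y$ if for every $\varepsilon>0$ and $T>0$ there is an $(\varepsilon,T)$-chain from $x$ to $y$. Shadow chains: for $T\ge1$, a piecewise continuous $\gamma:[0,T]\to X$ is $\varepsilon$-close to $F$ if $d(\gamma(t+\tau),F^\tau(\gamma(t)))<\varepsilon$ for every $\tau\in[0,1]$ and $t\in[0,T-\tau]$. An $\varepsilon$-chain from $x$ to $y$ is such a $\gamma$ with $\gamma(0)=x$, $\gamma(T)=y$. Write $x\succcurlyeq_{\mathcal S} y$ if for every $\varepsilon>0$ there is an $\varepsilon$-chain from $x$ to $y$. For $\star\in\{\mathcal C,\mathcal S\}$: $x$ is $\star$-chain-recurrent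 if $x$ is a fixed point of $F$ or there is $y$ with $x\succcurlyeq_\star y$ and $y\succcurlyeq_\star x$; $\mathcal R_\star$ denotes the set of $\star$-chain-recurrent points. *)

(* Defs.v *)
From Stdlib Require Import Reals List.
Open Scope R_scope.

Section Defs.
Context {X : Type}.
Variable d : X -> X -> R.

Definition is_metric : Prop :=
  (forall x y, 0 <= d x y) /\
  (forall x y, d x y = 0 <-> x = y) /\
  (forall x y, d x y = d y x) /\
  (forall x y z, d x z <= d x y + d y z).

Definition mopen (U : X -> Prop) : Prop :=
  forall x, U x -> exists r, 0 < r /\ forall y, d x y < r -> U y.

Definition compact_space : Prop :=
  forall (I : Type) (U : I -> X -> Prop),
    (forall i, mopen (U i)) ->
    (forall x, exists i, U i x) ->
    exists l : list I, forall x, exists i, In i l /\ U i x.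

(* F : [0,oo) x X -> X is a semiflow (values of F at negative times are irrelevant) *)
Definition semiflow (F : R -> X -> X) : Prop :=
  (forall t x, 0 <= t -> forall eps, 0 < eps -> exists delta, 0 < delta /\
      forall s y, 0 <= s -> Rabs (s - t) < delta -> d x y < delta ->
        d (F s y) (F t x) < eps) /\
  (forall x, F 0 x = x) /\
  (forall t s x, 0 <= t -> 0 <= s -> F (t + s) x = F t (F s x)).

Definition conley_chain (F : R -> X -> X) (eps T : R) (x y : X) : Prop :=
  exists (N : nat) (xs : nat -> X) (ts : nat -> R),
    (1 <= N)%nat /\ xs 0%nat = x /\ xs N = y /\
    forall i, (i < N)%nat -> T <= ts i /\ d (F (ts i) (xs i)) (xs (S i)) < eps.

Definition conley_le (F : R -> X -> X) (x y : X) : Prop :=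
  forall eps T, 0 < eps -> 0 < T -> conley_chain F eps T x y.

(* gamma : [0,T] -> X (values outside [0,T] irrelevant) *)
Definition cont_within_at (T : R) (gamma : R -> X) (t : R) : Prop :=
  forall eps, 0 < eps -> exists delta, 0 < delta /\
    forall s, 0 <= s <= T -> Rabs (s - t) < delta -> d (gamma s) (gamma t) < eps.

Definition left_limit_exists (T : R) (gamma : R -> X) (p : R) : Prop :=
  exists L, forall eps, 0 < eps -> exists delta, 0 < delta /\
    forall s, 0 <= s <= T -> p - delta < s < p -> d (gamma s) L < eps.

Definition right_limit_exists (T : R) (gamma : R -> X) (p : R) : Prop :=
  exists L, forall eps, 0 < eps -> exists delta, 0 < delta /\
    forall s, 0 <= s <= T -> p < s < p + delta -> d (gamma s) L < eps.

Definition piecewise_continuous (T : R) (gamma : R -> X) : Prop :=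
  exists l : list R,
    (forall t, 0 <= t <= T -> ~ In t l -> cont_within_at T gamma t) /\
    (forall p, In p l -> 0 <= p <= T ->
       (0 < p -> left_limit_exists T gamma p) /\
       (p < T -> right_limit_exists T gamma p)).

Definition eps_close (F : R -> X -> X) (eps T : R) (gamma : R -> X) : Prop :=
  forall tau t, 0 <= tau <= 1 -> 0 <= t <= T - tau ->
    d (gamma (t + tau)) (F tau (gamma t)) < eps.

Definition shadow_chain (F : R -> X -> X) (eps : R) (x y : X) : Prop :=
  exists (T : R) (gamma : R -> X),
    1 <= T /\ piecewise_continuous T gamma /\ eps_close F eps T gamma /\
    gamma 0 = x /\ gamma T = y.

Definition shadow_le (F : R -> X -> X) (x y : X) : Prop :=
  forall eps, 0 < eps -> shadow_chain F eps x y.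

Definition fixed_point (F : R -> X -> X) (x : X) : Prop :=
  forall t, 0 <= t -> F t x = x.

Definition chain_recurrent (le : X -> X -> Prop) (F : R -> X -> X) (x : X) : Prop :=
  fixed_point F x \/ exists y, le x y /\ le y x.

Definition R_C (F : R -> X -> X) (x : X) : Prop := chain_recurrent (conley_le F) F x.
Definition R_S (F : R -> X -> X) (x : X) : Prop := chain_recurrent (shadow_le F) F x.
End Defs.

(* Main.v *)
Require Import Defs.
From Stdlib Require Import Reals Lra Lia Classical List ZArith.
Open Scope R_scope.

Lemma met_refl {X} (d : X -> X -> R) (Hd : is_metric d) x : d x x = 0.
Proof. destruct Hd as (_&H&_). apply H; reflexivity. Qed.

Lemma stepA {X} (d : X -> X -> R) F (Hd : is_metric d) (HF : semiflow d F) :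
  forall x eps, 0 < eps -> exists eta, 0 < eta /\
    forall s, 0 <= s <= 1 -> forall y, d x y < eta -> d (F s y) (F s x) < eps.
Proof.
  destruct Hd as (Hnn & Hz & Hsym & Htri).
  destruct HF as (Hcont & H0 & Hsg).
  intros x eps He.
  set (A := fun u => 0 <= u <= 1 /\ exists eta, 0 < eta /\
     forall s, 0 <= s <= u -> forall y, d x y < eta -> d (F s y) (F s x) < eps).
  assert (A0 : A 0).
  { split. lra. exists eps; split; [lra|]. intros s Hs y Hy.
    replace s with 0 by lra. rewrite !H0. rewrite Hsym; auto. }
  assert (Hb : bound A). { exists 1. intros u [Hu _]. lra. }
  destruct (completeness A Hb (ex_intro _ 0 A0)) as [c [Hub Hlub]].
  assert (Hc0 : 0 <= c) by (apply Hub; exact A0).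
  assert (Hc1 : c <= 1) by (apply Hlub; intros u [Hu _]; lra).
  destruct (Hcont c x Hc0 (eps/2) ltac:(lra)) as [dc [Hdc Hc]].
  assert (Hex : exists u, A u /\ c - dc < u).
  { apply NNPP; intro Hn.
    assert (c <= c - dc).
    { apply Hlub. intros u Hu. apply Rnot_lt_le. intro Hlt. apply Hn. exists u; split; auto. }
    lra. }
  destruct Hex as [u [[Hu [eu [Heu Hpu]]] Hcu]].
  set (v := Rmin 1 (c + dc/2)).
  assert (Av : A v).
  { split. unfold v, Rmin. destruct Rle_dec; lra.
    exists (Rmin eu dc). split. apply Rmin_glb_lt; lra.
    intros s Hs y Hy.
    assert (Hy1 : d x y < eu) by (eapply Rlt_le_trans; [exact Hy| apply Rmin_l]).
    assert (Hy2 : d x y < dc) by (eapply Rlt_le_trans; [exact Hy| apply Rmin_r]).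
    destruct (Rle_dec s u) as [Hsu|Hsu].
    - apply Hpu; auto. lra.
    - assert (Hv : v <= c + dc/2) by apply Rmin_r.
      assert (Habs : Rabs (s - c) < dc) by (apply Rabs_def1; lra).
      pose proof (Hc s y ltac:(lra) Habs Hy2) as E1.
      assert (Hxx : d x x < dc) by (rewrite (proj2 (Hz x x) eq_refl); auto).
      pose proof (Hc s x ltac:(lra) Habs Hxx) as E2.
      pose proof (Htri (F s y) (F c x) (F s x)). rewrite (Hsym (F c x)) in H. lra. }
  assert (Hvc : v <= c) by (apply Hub; exact Av).
  assert (v = 1).
  { revert Hvc. unfold v, Rmin. destruct Rle_dec; intros; lra. }
  rewrite H in Av. destruct Av as [_ [eta [He1 He2]]].
  exists eta; split; auto.
Qed.

Lemma UC {X} (d : X -> X -> R) F (Hd : is_metric d) (Hc : compact_space d) (HF : semiflow d F) :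
  forall eps, 0 < eps -> exists delta, 0 < delta /\
    forall s, 0 <= s <= 1 -> forall a b, d a b < delta -> d (F s a) (F s b) < eps.
Proof.
  intros eps He.
  pose proof (stepA d F Hd HF) as SA.
  destruct Hd as (Hnn & Hz & Hsym & Htri).
  set (P := fun (p : X * R) => 0 < snd p /\ forall s, 0 <= s <= 1 -> forall y,
        d (fst p) y < snd p -> d (F s y) (F s (fst p)) < eps/2).
  set (I := {p : X * R | P p}).
  set (U := fun (i : I) (y : X) => d (fst (proj1_sig i)) y < snd (proj1_sig i) / 2).
  assert (Hop : forall i, mopen d (U i)).
  { intros i y Hy. exists (snd (proj1_sig i) / 2 - d (fst (proj1_sig i)) y).
    split. unfold U in Hy. lra. intros z Hz'. unfold U.
    pose proof (Htri (fst (proj1_sig i)) y z). lra. }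
  assert (Hcov : forall y, exists i, U i y).
  { intro y. destruct (SA y (eps/2) ltac:(lra)) as [eta [He1 He2]].
    assert (Pp : P (y, eta)) by (split; auto).
    exists (exist _ (y, eta) Pp). unfold U; simpl. rewrite (proj2 (Hz y y) eq_refl). lra. }
  destruct (Hc I U Hop Hcov) as [l Hl].
  set (m := fold_right (fun (i : I) acc => Rmin (snd (proj1_sig i) / 2) acc) 1 l).
  assert (Hm : 0 < m /\ forall i, In i l -> m <= snd (proj1_sig i) / 2).
  { unfold m. clear Hl. induction l as [|i l IH]; simpl.
    - split; [lra| tauto].
    - destruct IH as [IH1 IH2]. destruct (proj2_sig i) as [Hp _].
      split. apply Rmin_glb_lt; lra.
      intros j [<-|Hj]. apply Rmin_l. eapply Rle_trans; [apply Rmin_r| auto]. }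
  destruct Hm as [Hm0 Hm1].
  exists m. split; auto. intros s Hs a b Hab.
  destruct (Hl a) as [i [Hi Hia]]. unfold U in Hia.
  pose proof (Hm1 i Hi).
  destruct (proj2_sig i) as [_ Hp].
  pose proof (Hp s Hs a ltac:(lra)) as E1.
  pose proof (Htri (fst (proj1_sig i)) a b).
  assert (Hb : d (fst (proj1_sig i)) b < snd (proj1_sig i)) by lra.
  idtac.
  pose proof (Hp s Hs b Hb) as E2.
  pose proof (Htri (F s a) (F s (fst (proj1_sig i))) (F s b)).
  rewrite (Hsym (F s (fst (proj1_sig i))) (F s b)) in H1. lra.
Qed.

Lemma UCn {X} (d : X -> X -> R) F (Hd : is_metric d) (Hc : compact_space d) (HF : semiflow d F) :
  forall n eps, 0 < eps -> exists delta, 0 < delta /\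
    forall s, 0 <= s <= INR n -> forall a b, d a b < delta -> d (F s a) (F s b) < eps.
Proof.
  pose proof (UC d F Hd Hc HF) as U.
  destruct HF as (_ & H0 & Hsg).
  induction n as [|n IH]; intros eps He.
  - exists eps; split; auto. intros s Hs a b Hab. simpl in Hs.
    replace s with 0 by lra. rewrite !H0. auto.
  - destruct (U eps He) as [d1 [Hd1 P1]].
    destruct (IH eps He) as [dn [Hdn Pn]].
    destruct (U dn Hdn) as [d2 [Hd2 P2]].
    exists (Rmin d1 d2). split. apply Rmin_glb_lt; auto.
    intros s Hs a b Hab.
    assert (Ha1 : d a b < d1) by (eapply Rlt_le_trans; [exact Hab| apply Rmin_l]).
    assert (Ha2 : d a b < d2) by (eapply Rlt_le_trans; [exact Hab| apply Rmin_r]).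
    rewrite S_INR in Hs.
    destruct (Rle_dec s 1).
    + apply P1; auto; lra.
    + replace s with ((s - 1) + 1) by ring. rewrite !Hsg by lra.
      apply Pn. lra. apply P2; auto; lra.
Qed.

Inductive dchain {X} (d : X -> X -> R) (F : R -> X -> X) (delta : R) : nat -> R -> X -> X -> Prop :=
| dnil a : dchain d F delta 0 0 a a
| dcons a b c s m T0 : 1/2 <= s <= 1 -> d b (F s a) < delta ->
    dchain d F delta m T0 b c -> dchain d F delta (S m) (s + T0) a c.

Lemma dchain_time {X} d F delta m Tt (a c : X) : dchain d F delta m Tt a c -> INR m / 2 <= Tt <= INR m.
Proof. induction 1. simpl; lra. rewrite S_INR. lra. Qed.

Lemma dchain_app {X} d F delta m Tt (a b : X) : dchain d F delta m Tt a b ->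
  forall n Tt' c, dchain d F delta n Tt' b c -> dchain d F delta (m + n) (Tt + Tt') a c.
Proof.
  induction 1; intros n Tt' c' H'.
  - simpl. rewrite Rplus_0_l. auto.
  - simpl. rewrite Rplus_assoc. econstructor; eauto.
Qed.

Lemma dchain_split {X} d F delta p : forall q Tt (a c : X), dchain d F delta (p + q) Tt a c ->
  exists b Tt1 Tt2, Tt = Tt1 + Tt2 /\ dchain d F delta p Tt1 a b /\ dchain d F delta q Tt2 b c.
Proof.
  induction p as [|p IH]; intros q Tt a c H.
  - exists a, 0, Tt. split. ring. split. constructor. exact H.
  - simpl in H. inversion H; subst.
    destruct (IH _ _ _ _ H3) as [b' [Tt1 [Tt2 [E [H4 H5]]]]].
    exists b', (s + Tt1), Tt2. split. rewrite E; ring. split; auto. econstructor; eauto.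
Qed.

Lemma Comp {X} (d : X -> X -> R) F (Hd : is_metric d) (Hc : compact_space d) (HF : semiflow d F) :
  forall m eps, 0 < eps -> exists delta, 0 < delta /\
    forall delta' Tt a c, delta' <= delta -> dchain d F delta' m Tt a c -> d (F Tt a) c < eps.
Proof.
  pose proof (UCn d F Hd Hc HF) as U.
  pose proof Hd as (Hnn & Hz & Hsym & Htri).
  pose proof HF as (_ & H0 & Hsg).
  induction m as [|m IH]; intros eps He.
  - exists 1. split. lra. intros delta' Tt a c _ H. inversion H; subst.
    rewrite H0, (proj2 (Hz c c) eq_refl). auto.
  - destruct (IH (eps/2) ltac:(lra)) as [di [Hdi Pi]].
    destruct (U m (eps/2) ltac:(lra)) as [du [Hdu Pu]].
    exists (Rmin di du). split. apply Rmin_glb_lt; auto.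
    intros delta' Tt a c Hle H. inversion H as [|a0 b0 c0 s0 m0 T1 Hs Hb H7]; subst.
    pose proof (dchain_time _ _ _ _ _ _ _ H7) as Ht.
    assert (Hle1 : delta' <= di) by (eapply Rle_trans; [exact Hle| apply Rmin_l]).
    assert (Hle2 : delta' <= du) by (eapply Rle_trans; [exact Hle| apply Rmin_r]).
    rewrite Rplus_comm, Hsg by lra.
    pose proof (Pi delta' T1 b0 c Hle1 H7) as E2.
    assert (E1 : d (F T1 (F s0 a)) (F T1 b0) < eps/2).
    { apply Pu. lra. rewrite Hsym. lra. }
    pose proof (Htri (F T1 (F s0 a)) (F T1 b0) c). lra.
Qed.

Lemma Comp' {X} (d : X -> X -> R) F (Hd : is_metric d) (Hc : compact_space d) (HF : semiflow d F) :
  forall M eps, 0 < eps -> exists delta, 0 < delta /\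
    forall m delta' Tt a c, (m <= M)%nat -> delta' <= delta -> dchain d F delta' m Tt a c -> d (F Tt a) c < eps.
Proof.
  intros M eps He. induction M as [|M IH].
  - destruct (Comp d F Hd Hc HF 0 eps He) as [dl [Hdl P]].
    exists dl. split; auto. intros m delta' Tt a c Hm. replace m with 0%nat by lia. apply P.
  - destruct IH as [dl [Hdl P]].
    destruct (Comp d F Hd Hc HF (S M) eps He) as [dm [Hdm Pm]].
    exists (Rmin dl dm). split. apply Rmin_glb_lt; auto.
    intros m delta' Tt a c Hm Hle.
    destruct (Nat.eq_dec m (S M)) as [->|Hne].
    + apply Pm. eapply Rle_trans; [exact Hle| apply Rmin_r].
    + apply P. lia. eapply Rle_trans; [exact Hle| apply Rmin_l].
Qed.

Lemma conley_one {X} (d : X -> X -> R) F eps T t (a b : X) :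
  T <= t -> d (F t a) b < eps -> conley_chain d F eps T a b.
Proof.
  intros H1 H2. exists 1%nat, (fun i => match i with 0%nat => a | _ => b end), (fun _ => t).
  split; [lia|]. split; [auto|]. split; [auto|].
  intros i Hi. replace i with 0%nat by lia. split; auto.
Qed.

Lemma conley_cons {X} (d : X -> X -> R) F eps T t (a b c : X) :
  T <= t -> d (F t a) b < eps -> conley_chain d F eps T b c -> conley_chain d F eps T a c.
Proof.
  intros H1 H2 [N [xs [ts [HN [H0 [HNe Hs]]]]]].
  exists (S N), (fun i => match i with 0%nat => a | S j => xs j end),
    (fun i => match i with 0%nat => t | S j => ts j end).
  split; [lia|]. split; [auto|]. split; [auto|].
  intros [|i] Hi. split; auto. rewrite H0; auto. apply Hs. lia.
Qed.

Lemma grouping {X} (d : X -> X -> R) F (Hd : is_metric d) (Hc : compact_space d) (HF : semiflow d F)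
  eps T (K : nat) delta : (1 <= K)%nat -> 2 * T <= INR K ->
  (forall m delta' Tt a c, (m <= K + K)%nat -> delta' <= delta -> dchain d F delta' m Tt a c -> d (F Tt a) c < eps) ->
  forall m Tt (a b : X), (K <= m)%nat -> dchain d F delta m Tt a b -> conley_chain d F eps T a b.
Proof.
  intros HK HKT P m. induction m as [m IH] using (well_founded_induction Wf_nat.lt_wf).
  intros Tt a b Hm H.
  destruct (Compare_dec.le_lt_dec (K + K) m) as [Hl|Hl].
  - replace m with (K + (m - K))%nat in H by lia.
    destruct (dchain_split _ _ _ _ _ _ _ _ H) as [b' [T1 [T2 [E [H1 H2]]]]].
    pose proof (dchain_time _ _ _ _ _ _ _ H1).
    apply (conley_cons d F eps T T1 a b'). lra.
    apply (P K delta); auto. lia. lra.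
    apply (IH (m - K)%nat ltac:(lia) T2); auto. lia.
  - pose proof (dchain_time _ _ _ _ _ _ _ H).
    apply le_INR in Hm.
    apply (conley_one d F eps T Tt). lra.
    apply (P m delta); auto. lia. lra.
Qed.

Lemma nat_up (r : R) : 0 < r -> exists n : nat, r < INR n /\ INR n <= r + 1.
Proof.
  intro Hr. destruct (archimed r) as [H1 H2].
  assert (Hz : (0 < up r)%Z) by (apply lt_0_IZR; lra).
  exists (Z.to_nat (up r)). rewrite INR_IZR_INZ, Z2Nat.id by lia. lra.
Qed.

Lemma discretize {X} (d : X -> X -> R) F delta (x y : X) :
  shadow_chain d F delta x y -> exists m Tt, (1 <= m)%nat /\ dchain d F delta m Tt x y.
Proof.
  intros [T [g [HT [_ [Hcl [Hg0 HgT]]]]]].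
  destruct (nat_up T ltac:(lra)) as [n [Hn1 Hn2]].
  assert (Hnp : 0 < INR n) by lra.
  set (h := T / INR n).
  assert (Hh : INR n * h = T) by (unfold h; field; lra).
  assert (Hh1 : 1/2 <= h <= 1).
  { split; apply (Rmult_le_reg_l (INR n)); auto; rewrite Hh; lra. }
  assert (Gen : forall k, (k <= n)%nat -> dchain d F delta k (INR k * h) (g (T - INR k * h)) y).
  { induction k as [|k IH]; intro Hk.
    - simpl. rewrite Rmult_0_l, Rminus_0_r, HgT. constructor.
    - replace (INR (S k) * h) with (h + INR k * h) by (rewrite S_INR; ring).
      econstructor. exact Hh1.
      2: apply IH; lia.
      assert (Hk' : INR (S k) <= INR n) by (apply le_INR; auto).
      rewrite S_INR in Hk'.
      assert (Hk0 : 0 <= INR k) by apply pos_INR.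
      replace (T - INR k * h) with ((T - (h + INR k * h)) + h) by ring.
      apply Hcl. lra. split; nra. }
  exists n, T. split.
  - assert (INR 1 < INR n) by (simpl; lra). apply INR_lt in H. lia.
  - specialize (Gen n (le_n n)). rewrite Hh in Gen. rewrite Rminus_diag, Hg0 in Gen. exact Gen.
Qed.

Lemma loops {X} (d : X -> X -> R) F delta (y : X) l L : (1 <= l)%nat -> dchain d F delta l L y y ->
  forall j, exists m Tt, (j <= m)%nat /\ dchain d F delta m Tt y y.
Proof.
  intros Hl H. induction j as [|j [m [Tt [Hm Hc]]]].
  - exists 0%nat, 0. split; auto. constructor.
  - exists (l + m)%nat, (L + Tt). split. lia. eapply dchain_app; eauto.
Qed.

Theorem proposition3p5 (X : Type) (d : X -> X -> R)
  (Hd : is_metric d) (Hc : compact_space d)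
  (F : R -> X -> X) (HF : semiflow d F) :
  (forall x y : X, R_S d F y -> shadow_le d F x y -> conley_le d F x y) /\
  (forall x : X, R_S d F x -> R_C d F x).
Proof.
  assert (P1 : forall x y : X, R_S d F y -> shadow_le d F x y -> conley_le d F x y).
  { intros x y Hy Hxy eps T He HT.
    destruct (nat_up (2 * T) ltac:(lra)) as [K [HK1 HK2]].
    assert (HK : (1 <= K)%nat).
    { destruct K. simpl in HK1. lra. lia. }
    destruct (Comp' d F Hd Hc HF (K + K) eps He) as [delta [Hdel P]].
    assert (Hloop : exists l L, (1 <= l)%nat /\ dchain d F delta l L y y).
    { destruct Hy as [Hfix | [z [Hyz Hzy]]].
      - exists 1%nat, (1 + 0). split; auto. econstructor. lra.
        rewrite Hfix by lra. rewrite met_refl; auto. constructor.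
      - destruct (discretize d F delta y z (Hyz delta Hdel)) as [m1 [T1 [Hm1 H1]]].
        destruct (discretize d F delta z y (Hzy delta Hdel)) as [m2 [T2 [Hm2 H2]]].
        exists (m1 + m2)%nat, (T1 + T2). split. lia. eapply dchain_app; eauto. }
    destruct Hloop as [l [L [Hl HL]]].
    destruct (loops d F delta y l L Hl HL K) as [m [Tt [Hm Hmc]]].
    destruct (discretize d F delta x y (Hxy delta Hdel)) as [m0 [T0 [_ H0]]].
    pose proof (dchain_app _ _ _ _ _ _ _ H0 _ _ _ Hmc) as Hall.
    apply (grouping d F Hd Hc HF eps T K delta HK ltac:(lra) P (m0 + m) (T0 + Tt)); auto. lia. }
  split; auto.
  intros x [Hfix | [y [Hxy Hyx]]].
  - left; auto.
  - right. exists y. split.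
    + apply P1; auto. right. exists x. split; auto.
    + apply P1; auto. right. exists y. split; auto.
Qed.
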